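(* Let $(N,v)$ be a TU game with $\Pi(v)=\emptyset$, and let $\delta>0$ be such that every value $v(S)$, $S\subseteq N$, is an integer multiple of $\delta$. Following the Coalition Proposal algorithm (described in the context) for $(N,v)$ with step $\delta$, starting from any environment state $(\mathbf{a},\mathcal{C})\in\Omega(v)$ whose aspirations are integer multiples of $\delta$, the environment state never converges (it never reaches a state from which it remains unchanged forever).
   Context: A TU game is a pair $(N,v)$ with $N=\{1,\dots,n\}$ and $v:2^N\to\mathbb{R}$, $v(\emptyset)=0$. $\mathcal{P}(N)$ denotes the set of partitions of $N$. A core solution is a pair $(\mathbf{x},\rho)$ with $\mathbf{x}\in\mathbb{R}^n$, $\rho\in\mathcal{P}(N)$, such that $\sum_{i\in S}x_i\ge v(S)$ for all $S\subseteq N$ and $\sum_{i\in S}x_i=v(S)$ for all $S\in\rho$; $\Pi(v)$ is the set of core solutions. Coalition Proposal algorithm with step $\delta$: each player $i$ holds an aspiration $a_i$ and a coalition state $C_i\subseteq N$. In each iteration: a player $i\in N$ is activated at random; $i$ chooses at random a set $S\subseteq N\setminus\{i\}$ and proposes $J=S\cup\{i\}$ (random choices independent across iterations, every player and every subset having positive probability). If $\sum_{j\in J}a_j+\delta\le v(J)$ (success): $a_i\leftarrow a_i+\delta$; then for every $j\in J$ and every $k\in C_j$ with $k\neq j$, set $C_k\leftarrow\emptyset$; then set $C_j\leftarrow J$ for all $j\in J$. Otherwise (failure): if $C_i=\emptyset$, set $a_i\leftarrow\max(v(\{i\}),a_i-\delta)$. Finally, if $a_i=v(\{i\})$ and $C_i=\emptyset$,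 set $C_i\leftarrow\{i\}$. The environment state is $(\mathbf{a},\mathcal{C})$ with $\mathbf{a}=(a_1,\dots,a_n)$ and $\mathcal{C}=\{C_i:i\in N\}$ the set of (nonempty) formed coalitions. A feasible environment state is a pair $(\mathbf{a},\mathcal{C})$ with $\mathbf{a}\in\mathbb{R}^n$ and $\mathcal{C}$ a set of pairwise disjoint subsets of $N$ such that $a_i\ge v(\{i\})$ for all $i\in N$ and $\sum_{i\in S}a_i\le v(S)$ for all $S\in\mathcal{C}$. $\Omega(v)$ is the set of feasible environment states. *)

(* Defs.v *)
From HB Require Import structures.
From mathcomp Require Import all_boot all_order all_algebra.
From mathcomp Require Import reals.
Set Implicit Arguments. Unset Strict Implicit. Unset Printing Implicit Defensive.
Import Order.TTheory GRing.Theory Num.Theory.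
Local Open Scope ring_scope.

Section CoalitionProposal.
Variables (R : realType) (n : nat).
Implicit Types (v : {set 'I_n} -> R).

Definition core_solution v (x : 'I_n -> R) (rho : {set {set 'I_n}}) : Prop :=
  partition rho [set: 'I_n] /\
  (forall S : {set 'I_n}, v S <= \sum_(i in S) x i) /\
  (forall S : {set 'I_n}, S \in rho -> \sum_(i in S) x i = v S).

Definition core_empty v : Prop :=
  ~ (exists (x : 'I_n -> R) (rho : {set {set 'I_n}}), core_solution v x rho).

Definition multiple_of (d r : R) : Prop := exists k : int, r = k%:~R * d.

Definition feasible_env v (a : {ffun 'I_n -> R}) (Cs : {set {set 'I_n}}) : Prop :=
  (forall S T, S \in Cs -> T \in Cs -> S != T -> [disjoint S & T]) /\
  (forall i, v [set i] <= a i) /\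
  (forall S, S \in Cs -> \sum_(i in S) a i <= v S).

(* Internal state: aspirations and per-player coalition states C_i *)
Definition istate := ({ffun 'I_n -> R} * {ffun 'I_n -> {set 'I_n}})%type.

(* Player states induced by a set of pairwise disjoint coalitions:
   C_i = the coalition of Cs containing i, or the empty set. *)
Definition init_C (Cs : {set {set 'I_n}}) : {ffun 'I_n -> {set 'I_n}} :=
  [ffun i => pblock Cs i].

Definition env (st : istate) : ({ffun 'I_n -> R} * {set {set 'I_n}})%type :=
  (st.1, [set st.2 i | i : 'I_n] :\ set0).

(* One iteration: player i activated, proposes J = S U {i} (i \notin S). *)
Definition step v (d : R) (st : istate) (i : 'I_n) (S : {set 'I_n}) : istate :=
  let a := st.1 in let C := st.2 in
  let J := i |: S in
  let '(a', C') :=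
    if \sum_(j in J) a j + d <= v J then
      let a1 := [ffun k => if k == i then a k + d else a k] in
      let C1 := [ffun k => if [exists j in J, (k \in C j) && (k != j)]
                           then set0 else C k] in
      let C2 := [ffun k => if k \in J then J else C1 k] in
      (a1, C2)
    else
      let a1 := [ffun k => if (k == i) && (C i == set0)
                           then Num.max (v [set i]) (a i - d) else a k] in
      (a1, C) in
  let C'' := [ffun k => if (k == i) && (a' i == v [set i]) && (C' i == set0)
                        then [set i] else C' k] in
  (a', C'').

(* States reachable by some sequence of iterations (any activated player and
   any proposal, each of which has positive probability). *)
Inductive reachable v (d : R) (st0 : istate) : istate -> Prop :=
| reach_refl : reachable v d st0 st0
| reach_step st (i : 'I_n) (S : {set 'I_n}) : reachable v d st0 st -> i \notin S ->
    reachable v d st0 (step v d st i S).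

End CoalitionProposal.

(* Main.v *)
Require Import Defs.
From HB Require Import structures.
From mathcomp Require Import all_boot all_order all_algebra.
From mathcomp Require Import reals lra.
From Stdlib Require Import Classical.
Import Order.TTheory GRing.Theory Num.Theory.
Local Open Scope ring_scope.

Module Helpers.
Set Implicit Arguments. Unset Strict Implicit. Unset Printing Implicit Defensive.
Section Aux.
Variables (R : realType) (n : nat) (v : {set 'I_n} -> R) (d : R).
Hypothesis hd : 0 < d.

Lemma mult_add x y : multiple_of d x -> multiple_of d y -> multiple_of d (x + y).
Proof. by move=> [k1 ->] [k2 ->]; exists (k1 + k2); rewrite intrD mulrDl. Qed.

Lemma mult_d : multiple_of d d.
Proof. by exists 1; rewrite mul1r. Qed.

Lemma mult_opp x : multiple_of d x -> multiple_of d (- x).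
Proof. by move=> [k ->]; exists (- k); rewrite mulrNz mulNr. Qed.

Lemma mult_sum (P : pred 'I_n) (F : 'I_n -> R) :
  (forall j, multiple_of d (F j)) -> multiple_of d (\sum_(j | P j) F j).
Proof.
move=> H; apply: (big_ind (multiple_of d)) => //; first by exists 0; rewrite mul0r.
exact: mult_add.
Qed.

Lemma mult_max x y : multiple_of d x -> multiple_of d y -> multiple_of d (Num.max x y).
Proof. by move=> hx hy; case: (leP x y). Qed.

Lemma mult_le x y : multiple_of d x -> multiple_of d y -> y < x + d -> y <= x.
Proof.
move=> [k1 ->] [k2 ->].
have -> : k1%:~R * d + d = (k1 + 1)%:~R * d by rewrite intrD mulrDl mul1r.
rewrite ltr_pM2r // ler_pM2r // ltr_int ler_int => h.
by rewrite -ltzD1.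
Qed.
End Aux.
Section Inv.
Variables (R : realType) (n : nat) (v : {set 'I_n} -> R) (d : R).

Lemma step_succ (a : {ffun 'I_n -> R}) C i S :
  \sum_(j in i |: S) a j + d <= v (i |: S) ->
  (step v d (a, C) i S).1 = [ffun k => if k == i then a k + d else a k] /\
  forall k, (step v d (a, C) i S).2 k =
     if k \in i |: S then i |: S else
     if [exists j in i |: S, (k \in C j) && (k != j)] then set0 else C k.
Proof.
move=> Hs; rewrite /step /= Hs /=; split => // k.
rewrite !ffunE setU11.
have -> : (i |: S == set0) = false.
  by apply/negbTE/set0Pn; exists i; rewrite setU11.
by rewrite andbF.
Qed.

Lemma step_fail (a : {ffun 'I_n -> R}) C i S :
  ~~ (\sum_(j in i |: S) a j + d <= v (i |: S)) ->
  (step v d (a, C) i S).1 = [ffun k => if (k == i) && (C i == set0)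
                           then Num.max (v [set i]) (a i - d) else a k] /\
  forall k, (step v d (a, C) i S).2 k =
     if (k == i) && ((if C i == set0 then Num.max (v [set i]) (a i - d) else a i)
                     == v [set i]) && (C i == set0) then [set i] else C k.
Proof.
move=> Hs; rewrite /step /= (negbTE Hs) /=; split => // k.
by rewrite !ffunE eqxx.
Qed.

Hypothesis hd : 0 < d.
Hypothesis hv : forall S, multiple_of d (v S).

Definition Inv (st : istate R n) : Prop :=
  (forall k, v [set k] <= st.1 k) /\
  (forall k, multiple_of d (st.1 k)) /\
  (forall k, st.2 k != set0 -> [/\ k \in st.2 k,
      (forall j, j \in st.2 k -> st.2 j = st.2 k) &
      \sum_(j in st.2 k) st.1 j <= v (st.2 k)]).

Lemma step_inv st i S : Inv st -> Inv (step v d st i S).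
Proof.
case: st => a C [Hr [Hm Hc]].
simpl in Hr, Hm, Hc.
set J := i |: S.
have iJ : i \in J by rewrite setU11.
case: (boolP (\sum_(j in J) a j + d <= v J)) => Hs.
- have [E HC] := step_succ C Hs; rewrite /Inv E.
  split; [|split].
  + move=> k; rewrite ffunE; case: eqP => _ //.
    by apply: le_trans (Hr k) _; rewrite lerDl ltW.
  + move=> k; rewrite ffunE; case: eqP => _ //.
    by apply: mult_add => //; exact: mult_d.
  + move=> k; rewrite /= !HC.
    case: ifP => kJ.
    * move=> _; split => //.
        by move=> j jJ; rewrite HC jJ.
      rewrite (bigD1 i) //= ffunE eqxx.
      rewrite (eq_bigr (fun j => a j)); last first.
        by move=> j /andP [_ /negbTE ji]; rewrite ffunE ji.
      by move: Hs; rewrite (bigD1 i) //=; lra.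
    * case: ifP => hex; first by rewrite eqxx.
      move=> Ck0.
      have [kC Ccons Csum] := Hc k Ck0.
      split => //.
      -- move=> j jC; rewrite HC.
         case: ifP => jJ.
           move/negbT: hex; case/negP; apply/existsP; exists j.
           rewrite jJ /= (Ccons j jC) kC /=.
           by apply/eqP => ekj; rewrite ekj jJ in kJ.
         case: ifP => hexj; last exact: Ccons.
         case/existsP: hexj => j' /andP [j'J /andP [jCj' jj']].
         have Cj'0 : C j' != set0 by apply/set0Pn; exists j.
         have [_ Cc' _] := Hc j' Cj'0.
         move/negbT: hex; case/negP; apply/existsP; exists j'.
         rewrite j'J /= -(Cc' j jCj') (Ccons j jC) kC /=.
         by apply/eqP => ekj; rewrite ekj j'J in kJ.
      -- rewrite (eq_bigr (fun j => a j)) //.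
         move=> j jC; rewrite ffunE; case: eqP => // eji.
         move: jC; rewrite eji => iC.
         move/negbT: hex; case/negP; apply/existsP; exists i.
         rewrite iJ /= (Ccons i iC) kC /=.
         by apply/eqP => eki; rewrite eki iJ in kJ.
- have [E HC] := step_fail C Hs; rewrite /Inv E.
  have Hle : forall k, [ffun k => if (k == i) && (C i == set0)
                then Num.max (v [set i]) (a i - d) else a k] k <= a k.
    move=> k; rewrite ffunE; case: ifP => // /andP [/eqP -> _].
    by rewrite ge_max Hr /= lerBlDr lerDl ltW.
  split; [|split].
  + move=> k; rewrite ffunE; case: ifP => // /andP [/eqP -> _].
    by rewrite le_max lexx.
  + move=> k; rewrite ffunE; case: ifP => // _.
    apply: mult_max => //; apply: mult_add => //; apply: mult_opp; exact: mult_d.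
  + move=> k; rewrite /= !HC.
    case: ifP => hk.
    * move=> _; case/andP: hk => /andP [/eqP -> he] Ci0.
      split; first by rewrite set11.
        by move=> j; rewrite inE => /eqP ->; rewrite HC eqxx he Ci0.
      rewrite big_set1 ffunE eqxx Ci0 /=.
      by move: he; rewrite Ci0 => /eqP ->.
    * move=> Ck0; have [kC Ccons Csum] := Hc k Ck0.
      split => //.
        move=> j jC; rewrite HC; case: ifP; last by rewrite (Ccons j jC).
        case/andP => /andP [/eqP eji _] Ci0.
        by move: Ci0; rewrite -eji (Ccons j jC) (negbTE Ck0).
      apply: le_trans Csum; apply: ler_sum => j _; exact: Hle.
Qed.
End Inv.
Lemma init_inv (R : realType) (n : nat) (v : {set 'I_n} -> R) (d : R)
  (a0 : {ffun 'I_n -> R}) (Cs : {set {set 'I_n}}) :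
  feasible_env v a0 Cs -> (forall i, multiple_of d (a0 i)) ->
  Inv v d (a0, init_C Cs).
Proof.
move=> [Hdis [Hr Hf]] Hm.
have tCs : trivIset Cs by apply/trivIsetP => A B hA hB; exact: Hdis.
split => //; split => // k /=; rewrite ffunE.
rewrite /pblock; case: pickP => [B /andP [BC kB] | _] /=; last by rewrite eqxx.
move=> _; split => //; last exact: Hf.
by move=> j jB; rewrite ffunE (def_pblock tCs BC jB).
Qed.
End Helpers.
Import Helpers.

Theorem proposition4 (R : realType) (n : nat) (v : {set 'I_n} -> R) (d : R) :
  v set0 = 0 ->
  core_empty v ->
  0 < d ->
  (forall S : {set 'I_n}, multiple_of d (v S)) ->
  forall (a0 : {ffun 'I_n -> R}) (Cs : {set {set 'I_n}}),
    feasible_env v a0 Cs ->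
    (forall i, multiple_of d (a0 i)) ->
    forall st : istate R n, reachable v d (a0, init_C Cs) st ->
      exists (i : 'I_n) (S : {set 'I_n}),
        i \notin S /\ env (step v d st i S) <> env st.
Proof.
move=> hv0 hce hd hv a0 Cs hfe hm st hreach.
have hinv : Inv v d st.
  elim: hreach => [|st' i S _ IH _]; first exact: init_inv.
  exact: step_inv.
apply: NNPP => H.
have Hfix : forall i (S : {set 'I_n}), i \notin S -> env (step v d st i S) = env st.
  move=> i S iS; apply: NNPP => hne; apply: H; by exists i, S.
case: st hinv Hfix {H hreach} => a C [Hr [Hm Hc]] Hfix.
simpl in Hr, Hm, Hc.
have F1 : forall i (S : {set 'I_n}), i \notin S -> ~~ (\sum_(j in i |: S) a j + d <= v (i |: S)).
  move=> i S iS; apply/negP => Hs.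
  have [E _] := step_succ C Hs.
  move: (Hfix i S iS); rewrite /env E => [[/ffunP /(_ i)]].
  rewrite ffunE eqxx => /eqP; rewrite -subr_eq0 addrAC subrr add0r => /eqP d0.
  by move: hd; rewrite d0 ltxx.
have F2 : forall i, C i != set0.
  move=> i; apply/negP => /eqP Ci0.
  have i0 : i \notin (set0 : {set 'I_n}) by rewrite in_set0.
  have Hs := F1 i set0 i0.
  have [E HC] := step_fail C Hs.
  move: (Hfix i set0 i0); rewrite /env E => [[Ea E2]].
  have Emax : Num.max (v [set i]) (a i - d) = a i.
    by move: Ea => /ffunP /(_ i); rewrite ffunE eqxx Ci0 eqxx.
  have Evi : Num.max (v [set i]) (a i - d) = v [set i].
    move: Emax; rewrite maxEle; case: ifP => // _ /eqP.
    rewrite -subr_eq0 addrAC subrr add0r oppr_eq0 => /eqP d0.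
    by move: hd; rewrite d0 ltxx.
  have : [set i] \in [set (step v d (a, C) i set0).2 k | k : 'I_n] :\ set0.
    rewrite !inE; apply/andP; split.
      by apply/set0Pn; exists i; rewrite inE.
    by apply/imsetP; exists i => //; rewrite HC eqxx Ci0 eqxx Evi eqxx.
  rewrite E2 !inE => /andP [_ /imsetP [k _ Ek]].
  have Ck0 : C k != set0 by rewrite -Ek; apply/set0Pn; exists i; rewrite inE.
  have [kC _ _] := Hc k Ck0.
  move: kC; rewrite -Ek inE => /eqP eki.
  by move: Ck0; rewrite eki Ci0 eqxx.
have Hrat : forall S, v S <= \sum_(j in S) a j.
  move=> S; case: (set_0Vmem S) => [-> | [i iS]].
    by rewrite big_set0 hv0.
  have := F1 i (S :\ i) (negbT (setD11 i S)); rewrite setD1K // -ltNge => hlt.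
  apply: (mult_le hd) => //; first by apply: mult_sum.
apply: hce; exists a, [set C k | k : 'I_n]; split; [|split] => //.
- rewrite /partition; apply/and3P; split.
  + apply/eqP/setP => k; rewrite inE; apply/bigcupP; exists (C k).
      exact: imset_f.
    by have [] := Hc k (F2 k).
  + apply/trivIsetP => A B /imsetP [k1 _ ->] /imsetP [k2 _ ->] hne.
    rewrite disjoint_subset; apply/subsetP => x x1; rewrite inE; apply/negP => x2.
    have [_ c1 _] := Hc k1 (F2 k1).
    have [_ c2 _] := Hc k2 (F2 k2).
    by move: hne; rewrite -(c1 x x1) -(c2 x x2) eqxx.
  + by apply/imsetP => [[k _ Ek]]; move: (F2 k); rewrite -Ek eqxx.
- move=> S /imsetP [k _ ->]; apply/eqP; rewrite eq_le Hrat andbT.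
  by have [] := Hc k (F2 k).
Qed.
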